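(* Let $\{\alpha_{n,m}\in k^\times:n\in\mathbb{Z},m\in\mathbb{N}\}$ be a family of nonzero scalars and let $\phi:H\to H$ be the linear map with $\phi(x^ny^m)=\alpha_{n,m}x^ny^m$ for all $n\in\mathbb{Z}$, $m\in\mathbb{N}$. Then $\phi$ is a coalgebra automorphism of $H$ if and only if $\alpha_{n,m}=\alpha_{n,i}\alpha_{n+i,m-i}$ for all $n\in\mathbb{Z}$, $m\in\mathbb{N}$ and $0\leq i\leq m$.
   Context: Let $k$ be a field and $0\neq q\in k$ not a root of unity. $H=k_q[x,x^{-1},y]$ is the $k$-algebra generated by $x,x^{-1},y$ with $xx^{-1}=x^{-1}x=1$, $yx=qxy$, a Hopf algebra with $\Delta(x)=x\otimes x$, $\Delta(x^{-1})=x^{-1}\otimes x^{-1}$, $\Delta(y)=y\otimes x+1\otimes y$, $\varepsilon(x)=1$, $\varepsilon(y)=0$; $\{x^ny^m:n\in\mathbb{Z},m\in\mathbb{N}\}$ is a $k$-basis, and $\Delta(x^ny^m)=\sum_{i=0}^m\binom{m}{i}_qx^ny^i\otimes x^{n+i}y^{m-i}$ with $q$-binomial coefficients $\binom{m}{i}_q$. *)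

(* Defs.v *)
From HB Require Import structures.
From mathcomp Require Import all_boot all_order all_algebra.
From mathcomp Require Import finmap.
Set Implicit Arguments. Unset Strict Implicit. Unset Printing Implicit Defensive.
Import Order.TTheory GRing.Theory Num.Theory.
Local Open Scope ring_scope.


Fixpoint qbinom (k : nzRingType) (q : k) (m i : nat) : k :=
  match m, i with
  | _, 0%N => 1
  | 0%N, _.+1 => 0
  | m'.+1, i'.+1 => qbinom q m' i' + q ^+ i'.+1 * qbinom q m' i'.+1
  end.

(* The underlying vector space of H = k_q[x, x^-1, y]: an element is the
   finitely supported family of its coordinates in the basis
   x^n y^m, indexed by (n, m) : int * nat. *)
Definition Hsp (k : fieldType) := {fsfun (int * nat) -> k with 0}.

Definition Hbas (k : fieldType) (p : int * nat) : Hsp k :=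
  [fsfun x in [fset p]%fset => (1 : k)].

(* Elements of H (x) H as formal finite sums  sum c * a (x) b ;
   interpreted by their coordinates on the basis x^n y^m (x) x^n' y^m'. *)
Definition Htens (k : fieldType) := seq (k * Hsp k * Hsp k).

Definition tcoord (k : fieldType) (t : Htens k) (pq : (int * nat) * (int * nat)) : k :=
  \sum_(u <- t) u.1.1 * u.1.2 pq.1 * u.2 pq.2.

Definition teq (k : fieldType) (t t' : Htens k) : Prop :=
  forall pq, tcoord t pq = tcoord t' pq.

Definition tmap (k : fieldType) (f g : Hsp k -> Hsp k) (t : Htens k) : Htens k :=
  [seq (u.1.1, f u.1.2, g u.2) | u <- t].

(* comultiplication, extended linearly from
   Delta(x^n y^m) = sum_(i=0..m) [m choose i]_q x^n y^i (x) x^(n+i) y^(m-i) *)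
Definition Hcomul (k : fieldType) (q : k) (h : Hsp k) : Htens k :=
  [seq (h r.1 * qbinom q r.1.2 r.2, Hbas k (r.1.1, r.2),
        Hbas k (r.1.1 + r.2%:Z, (r.1.2 - r.2)%N))
  | r <- [seq (r, i) | r <- finsupp h, i <- iota 0 r.2.+1]].

Definition Hcounit (k : fieldType) (h : Hsp k) : k :=
  \sum_(r <- finsupp h) h r * (r.2 == 0%N)%:R.

Definition coalg_map (k : fieldType) (q : k) (f : Hsp k -> Hsp k) : Prop :=
  (forall h, teq (Hcomul q (f h)) (tmap f f (Hcomul q h))) /\
  (forall h, Hcounit (f h) = Hcounit h).

Definition coalg_aut (k : fieldType) (q : k) (f : Hsp k -> Hsp k) : Prop :=
  bijective f /\ coalg_map q f.

Definition diagmap (k : fieldType) (alpha : int -> nat -> k) (h : Hsp k) : Hsp k :=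
  [fsfun p in finsupp h => alpha p.1 p.2 * h p].

(* Main.v *)
Require Import Defs.
From HB Require Import structures.
From mathcomp Require Import all_boot all_order all_algebra.
From mathcomp Require Import finmap.
From mathcomp Require Import ring zify.
Import Order.TTheory GRing.Theory Num.Theory.
Local Open Scope ring_scope.

Section S.
Variable k : fieldType.

Lemma sum_single (T : eqType) (s : seq T) (x0 : T) (F : T -> k) :
  uniq s -> (forall x, x != x0 -> F x = 0) ->
  \sum_(x <- s) F x = if x0 \in s then F x0 else 0.
Proof.
move=> us H; case: ifP => xin.
  rewrite (bigD1_seq x0) //= big1 ?addr0 // => x /H //.
by rewrite big1_seq // => x /andP[_ xs]; apply: H; apply: contraFneq xin => <-.
Qed.

Lemma Hbas_E (p p' : int * nat) : Hbas k p p' = (p' == p)%:R.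
Proof. by rewrite /Hbas fsfunE inE; case: eqP. Qed.

Lemma diagmap_E alpha (h : Hsp k) p : diagmap alpha h p = alpha p.1 p.2 * h p.
Proof.
rewrite /diagmap fsfunE; case: ifP => // /negbT.
by rewrite memNfinsupp => /eqP ->; rewrite mulr0.
Qed.

Lemma tcoord_tmap (alpha : int -> nat -> k) (t : Htens k) p1 p2 :
  tcoord (tmap (diagmap alpha) (diagmap alpha) t) (p1, p2) =
  alpha p1.1 p1.2 * alpha p2.1 p2.2 * tcoord t (p1, p2).
Proof.
rewrite /tcoord /tmap big_map big_distrr; apply: eq_bigr => u _ /=.
rewrite !diagmap_E; ring.
Qed.

Lemma qbinom_prod (q : k) m i :
  qbinom q m i * \prod_(j < i) (1 - q ^+ j.+1) = \prod_(j < i) (1 - q ^+ (m - j)).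
Proof.
elim: m i => [|m IH] [|i] /=; rewrite ?big_ord0 ?mulr1 //.
  by rewrite mul0r big_ord_recl subnn expr0 subrr mul0r.
rewrite big_ord_recr /= big_ord_recl /=.
under [X in _ = _ * X]eq_bigr => j _ do rewrite /bump /= add1n subSS.
rewrite subn0 mulrDl mulrA IH.
rewrite -(mulrA (q ^+ i.+1)).
have := IH i.+1; rewrite big_ord_recr /= => ->.
rewrite big_ord_recr /=.
case: (leqP i m) => him.
  have E : q ^+ m.+1 = q ^+ i.+1 * q ^+ (m - i) by rewrite -exprD; congr (_ ^+ _); lia.
  rewrite E; ring.
have P0 : \prod_(j < i) (1 - q ^+ (m - j)) = 0.
  rewrite (bigD1 (Ordinal him)) //= subnn expr0 subrr mul0r //.
by rewrite P0; ring.
Qed.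

Lemma qbinom_neq0 (q : k) (hq : forall n : nat, (0 < n)%N -> q ^+ n != 1) m i :
  (i <= m)%N -> qbinom q m i != 0.
Proof.
move=> im; apply/negP => /eqP g0.
have := qbinom_prod q m i; rewrite g0 mul0r => /esym/eqP.
rewrite prodf_seq_eq0 => /hasP[j _ /=]; rewrite subr_eq0 eq_sym.
by apply/negP; apply: hq; have := ltn_ord j; lia.
Qed.

Lemma tcoord_comul (q : k) (h : Hsp k) a i b j :
  tcoord (Hcomul q h) ((a, i), (b, j)) =
  (b == a + i%:Z)%:R * h (a, (i + j)%N) * qbinom q (i + j) i.
Proof.
rewrite /tcoord /Hcomul big_map big_allpairs_dep /=.
rewrite (eq_bigr (fun r => (r == (a,(i+j)%N))%:R * ((b == a + i%:Z)%:R * h r * qbinom q (i+j) i))); last first.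
  move=> [r1 r2] _.
  rewrite (@sum_single _ (iota 0 r2.+1) i _ (iota_uniq _ _)) => [|i' ne]; last first.
    by rewrite !Hbas_E xpair_eqE (eq_sym i) (negbTE ne) andbF mulr0 mul0r.
  rewrite mem_iota /= !Hbas_E !xpair_eqE eqxx andbT.
  case: (r1 =P a) => [->|ne]; last first.
    by rewrite (eq_sym a) (introF eqP ne) /= !mulr0 !mul0r; case: ifP.
  rewrite eqxx /=; case: ifP => hi.
    case: (r2 =P (i + j)%N) => [->|ne2].
      by rewrite addKn eqxx andbT /=; ring.
    have -> : (j == (r2 - i)%N) = false by apply/eqP; lia.
    by rewrite andbF /=; ring.
  have -> : (r2 == (i + j)%N) = false by apply/eqP; lia.
  by rewrite /=; ring.
rewrite (@sum_single _ _ (a, (i + j)%N) _ (fset_uniq _)) => [|r /negbTE ->]; last by rewrite mul0r.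
case: ifP => [_|/negbT nin]; first by rewrite eqxx /=; ring.
by rewrite fsfun_dflt //; ring.
Qed.

Lemma finsupp_diag (alpha : int -> nat -> k) (halpha : forall n m, alpha n m != 0) (h : Hsp k) :
  finsupp (diagmap alpha h) = finsupp h.
Proof.
by apply/fsetP => p; rewrite !mem_finsupp diagmap_E mulf_eq0 negb_or halpha.
Qed.
End S.

Theorem lemma2p11 (k : fieldType) (q : k) (hq0 : q != 0)
  (hq : forall n : nat, (0 < n)%N -> q ^+ n != 1)
  (alpha : int -> nat -> k) (halpha : forall n m, alpha n m != 0) :
  coalg_aut q (diagmap alpha) <->
  (forall (n : int) (m i : nat), (i <= m)%N ->
     alpha n m = alpha n i * alpha (n + i%:Z) (m - i)%N).
Proof.
split.
  move=> [_ [Hc _]] n m i im.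
  have := Hc (Hbas k (n,m)) ((n,i),(n + i%:Z, (m-i)%N)).
  rewrite tcoord_comul tcoord_tmap tcoord_comul eqxx subnKC // !diagmap_E !Hbas_E eqxx /=.
  move=> E.
have gnz := @qbinom_neq0 k q hq m i im; apply: (mulIf gnz).
  by move: E; rewrite !mul1r !mulr1.
move=> H.
have a0 : forall n, alpha n 0%N = 1.
  move=> n; have := H n 0%N 0%N (leqnn 0); rewrite addr0 subnn => E.
  by apply: (mulfI (halpha n 0%N)); rewrite mulr1 -E.
split.
  exists (diagmap (fun n m => (alpha n m)^-1)) => h; apply/fsfunP => p;
    rewrite !diagmap_E mulrA ?mulVf ?mulfV ?mul1r //.
split.
  move=> h [[a i] [b j]]; rewrite tcoord_tmap !tcoord_comul diagmap_E /=.
  case: (b =P a + i%:Z) => [->|_]; last by rewrite /= !mul0r mulr0.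
  by rewrite (H a (i+j)%N i) ?leq_addr // addKn; ring.
move=> h; rewrite /Hcounit finsupp_diag //.
apply: eq_bigr => r _; rewrite diagmap_E; case: eqP => [e|_]; last by rewrite !mulr0.
by rewrite e a0 mul1r.
Qed.
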